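(* Let $A$ be a finite-dimensional irreducible ordered linear space. Then every order-automorphism $\chi$ of $A$ lies on an extremal ray of the cone $\mathcal{L}_{+}(A,A)$ of positive linear maps from $A$ to $A$; that is, whenever $\chi = \psi + \mu$ with $\psi,\mu \in \mathcal{L}_{+}(A,A)$, both $\psi$ and $\mu$ are non-negative scalar multiples of $\chi$.
   Context: An ordered linear space is a finite-dimensional real vector space $V$ with a positive cone $V_+$ that is a convex cone which is pointed ($V_+\cap -V_+=\{0\}$), closed and generating ($V=V_+-V_+$); $x\le y$ iff $y-x\in V_+$. A linear map $\phi:V\to W$ is positive if $\phi(V_+)\subseteq W_+$; $\mathcal{L}_+(V,W)$ denotes the cone of positive linear maps. An order-automorphism of $V$ is a linear bijection $\phi:V\to V$ with $\phi(x)\ge 0$ iff $x\ge 0$. The ordered direct sum of ordered linear spaces $V_1,V_2$ is $V_1\oplus V_2$ with positive cone $\{x+y: x\in (V_1)_+, y\in (V_2)_+\}$. $V$ is irreducible if it admits no decomposition as an ordered direct sum of two nonzero ordered subspaces. *)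

(* Defs.v *)
From HB Require Import structures.
From mathcomp Require Import all_boot all_order all_algebra.
From mathcomp Require Import all_classical all_reals all_analysis.
Set Implicit Arguments. Unset Strict Implicit. Unset Printing Implicit Defensive.
Import Order.TTheory GRing.Theory Num.Theory.
Import numFieldNormedType.Exports.
Local Open Scope ring_scope.
Local Open Scope classical_set_scope.

(* A finite-dimensional real vector space is modelled as 'M[R]_(1, n),
   R : realType.  Linear maps V -> V are matrices acting on the right:
   x |-> x *m M. *)

Definition positive_cone (R : realType) (n : nat) (C : set 'M[R]_(1, n)) : Prop :=
  C 0 /\
  (forall x y, C x -> C y -> C (x + y)) /\
  (forall (a : R) x, 0 <= a -> C x -> C (a *: x)) /\
  (forall x, C x -> C (- x) -> x = 0) /\
  closed C /\
  (forall v, exists x y, C x /\ C y /\ v = x - y).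

Definition positive_map (R : realType) (n : nat) (C : set 'M[R]_(1, n))
  (M : 'M[R]_n) : Prop := forall x, C x -> C (x *m M).

Definition order_automorphism (R : realType) (n : nat) (C : set 'M[R]_(1, n))
  (M : 'M[R]_n) : Prop :=
  M \in unitmx /\ (forall x, C (x *m M) <-> C x).

(* (V, C) is the ordered direct sum of the nonzero subspaces (row spaces)
   V1 and V2, each carrying the induced cone C ∩ Vi. *)
Definition ordered_direct_sum_decomp (R : realType) (n : nat)
  (C : set 'M[R]_(1, n)) (V1 V2 : 'M[R]_n) : Prop :=
  [/\ V1 != 0, V2 != 0,
      (V1 :&: V2 == (0 : 'M[R]_n))%MS,
      (V1 + V2 == 1%:M)%MS &
      (forall x, C x <-> exists y z, [/\ (y <= V1)%MS, C y, (z <= V2)%MS, C z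
                                      & x = y + z])].

Definition irreducible_ordered (R : realType) (n : nat) (C : set 'M[R]_(1, n)) : Prop :=
  ~ exists V1 V2 : 'M[R]_n, ordered_direct_sum_decomp C V1 V2.

(* Main.v *)
Require Import Defs.
From HB Require Import structures.
From mathcomp Require Import all_boot all_order all_algebra.
From mathcomp Require Import all_classical all_reals all_analysis.
From mathcomp Require Import ring lra zify.
Import Order.TTheory GRing.Theory Num.Theory.
Import numFieldNormedType.Exports.
Local Open Scope ring_scope.
Local Open Scope classical_set_scope.
Set Implicit Arguments. Unset Strict Implicit. Unset Printing Implicit Defensive.
Lemma cone_unb (R : realType) (n : nat) (C : set 'rV[R]_n) (hC : positive_cone C)
  (x y : 'rV[R]_n) : C x -> (forall c, C (y - c *: x)) -> x = 0.
Proof.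
case: hC => [C0 [CD [CZ [Cpt [Ccl Cgen]]]]] Cx Hy.
apply: Cpt => //.
have cv : (fun k : nat => (k.+1%:R)^-1 *: y - x) @ \oo --> 0 *: y - x.
  apply: cvgB; last exact: cvg_cst.
  apply: cvgZ; last exact: cvg_cst.
  exact: cvg_harmonic.
rewrite scale0r sub0r in cv.
apply: (closed_cvg _ Ccl _ _ cv).
apply: nearW => k.
have -> : (k.+1%:R)^-1 *: y - x = (k.+1%:R)^-1 *: (y - k.+1%:R *: x).
  by rewrite scalerBr scalerA mulVf ?scale1r // pnatr_eq0.
by apply: CZ => //; rewrite invr_ge0 ler0n.
Qed.

Lemma maxc (R : realType) (n : nat) (C : set 'rV[R]_n) (hC : positive_cone C)
  (x y : 'rV[R]_n) (c0 : R) : C x -> x != 0 -> C (y - c0 *: x) ->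
  exists cm, C (y - cm *: x) /\ forall c, C (y - c *: x) -> c <= cm.
Proof.
move=> Cx x0 Cc0.
have hC' := hC; case: hC' => [C0 [CD [CZ [Cpt [Ccl Cgen]]]]].
set S := [set c | C (y - c *: x)].
have down c c' : S c -> c' <= c -> S c'.
  move=> Sc le; rewrite /S /=.
  have -> : y - c' *: x = (y - c *: x) + (c - c') *: x.
    by rewrite scalerBl addrA subrK.
  by apply: CD => //; apply: CZ => //; rewrite subr_ge0.
have S0 : S !=set0 by exists c0.
have hs : has_sup S.
  split => //; apply/not_existsP => hno.
  have : x = 0.
    apply: (cone_unb hC Cx) => c.
    have /existsNP [c' /not_implyP [Sc' ncle]] := hno c.
    by apply: (down c') => //; apply/ltW; rewrite ltNge; apply/negP.
  by move/eqP; rewrite (negbTE x0).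
exists (sup S); split; last first.
  by move=> c Sc; apply: sup_upper_bound.
have cv : (fun k : nat => y - (sup S - (k.+1%:R)^-1) *: x) @ \oo --> y - (sup S - 0) *: x.
  apply: cvgB; first exact: cvg_cst.
  apply: cvgZ; last exact: cvg_cst.
  apply: cvgB; first exact: cvg_cst.
  exact: cvg_harmonic.
rewrite subr0 in cv.
apply: (closed_cvg _ Ccl _ _ cv).
apply: nearW => k.
have ep : 0 < (k.+1%:R : R)^-1 by rewrite invr_gt0 ltr0n.
have [e Se lte] := sup_adherent ep hs.
exact: (down e _ Se (ltW lte)).
Qed.

Definition Lsp (R : realType) (n : nat) (C : set 'rV[R]_n) (x v : 'rV[R]_n) :=
  exists t : R, 0 < t /\ C (x + t *: v) /\ C (x - t *: v).

Lemma cone_interp (R : realType) (n : nat) (C : set 'rV[R]_n) (hC : positive_cone C)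
  (x v : 'rV[R]_n) (s t : R) : C x -> 0 < t -> C (x + t *: v) -> 0 <= s <= t ->
  C (x + s *: v).
Proof.
case: hC => [C0 [CD [CZ _]]] Cx t0 Ct /andP[s0 st].
have -> : x + s *: v = (s / t) *: (x + t *: v) + (1 - s / t) *: x.
  rewrite scalerDr scalerA divfK ?gt_eqF // scalerBl scale1r.
  by rewrite addrAC (addrC ((s / t) *: x)) subrK.
apply: CD; apply: CZ => //; first by rewrite divr_ge0 // ltW.
by rewrite subr_ge0 ler_pdivrMr // mul1r.
Qed.

Lemma Lsp0 (R : realType) (n : nat) (C : set 'rV[R]_n) (x : 'rV[R]_n) :
  C x -> Lsp C x 0.
Proof. by move=> Cx; exists 1; rewrite scaler0 addr0 subr0. Qed.

Lemma LspN (R : realType) (n : nat) (C : set 'rV[R]_n) (x v : 'rV[R]_n) :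
  Lsp C x v -> Lsp C x (- v).
Proof. by case=> t [t0 [h1 h2]]; exists t; rewrite scalerN opprK. Qed.

Lemma LspZ (R : realType) (n : nat) (C : set 'rV[R]_n) (x v : 'rV[R]_n) (a : R) :
  C x -> Lsp C x v -> Lsp C x (a *: v).
Proof.
move=> Cx Lv; have [a0|a0] := eqVneq a 0; first by rewrite a0 scale0r; exact: Lsp0.
wlog ap : a a0 v Lv / 0 < a.
  move=> H; have [/H|an] := ltrP 0 a; first exact.
  have an' : a < 0 by rewrite lt_neqAle a0 an.
  have := H (- a) _ (- v) (LspN Lv); rewrite scaleNr scalerN opprK; apply.
    by rewrite oppr_eq0.
  by rewrite oppr_gt0.
case: Lv => t [t0 [h1 h2]]; exists (t / a); split; first by rewrite divr_gt0.
by rewrite scalerA divfK ?gt_eqF.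
Qed.

Lemma LspD (R : realType) (n : nat) (C : set 'rV[R]_n) (hC : positive_cone C)
  (x v w : 'rV[R]_n) : C x -> Lsp C x v -> Lsp C x w -> Lsp C x (v + w).
Proof.
move=> Cx [t [t0 [h1 h2]]] [s [s0 [k1 k2]]].
have hC' := hC; case: hC' => [C0 [CD [CZ _]]].
set r := Num.min t s.
have r0 : 0 < r by rewrite lt_min t0 s0.
have rt : 0 <= r <= t by rewrite ltW //= ge_min lexx.
have rs : 0 <= r <= s by rewrite ltW //= ge_min lexx orbT.
have sub (u : 'rV[R]_n) : x - r *: u = x + r *: (- u) by rewrite scalerN.
have a1 := cone_interp hC Cx t0 h1 rt.
have a2 := cone_interp hC Cx s0 k1 rs.
have a3 : C (x + r *: (- v)).
  by apply: (cone_interp hC Cx t0) => //; rewrite scalerN.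
have a4 : C (x + r *: (- w)).
  by apply: (cone_interp hC Cx s0) => //; rewrite scalerN.
exists (r / 2); split; first by rewrite divr_gt0.
split.
  have -> : x + r / 2 *: (v + w) = 2^-1 *: (x + r *: v) + 2^-1 *: (x + r *: w).
    rewrite -scalerDr; apply: (@scalerI _ _ 2); first by rewrite pnatr_eq0.
    rewrite scalerA mulfV ?pnatr_eq0 // scale1r scalerDr scalerA mulrCA mulfV ?pnatr_eq0 // mulr1.
    by rewrite scaler_nat mulr2n scalerDr; rewrite -!addrA; congr (_ + _); rewrite addrCA.
  by apply: CD; apply: CZ.
have -> : x - r / 2 *: (v + w) = 2^-1 *: (x + r *: (- v)) + 2^-1 *: (x + r *: (- w)).
  rewrite -scalerDr; apply: (@scalerI _ _ 2); first by rewrite pnatr_eq0.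
  rewrite scalerA mulfV ?pnatr_eq0 // scale1r scalerBr scalerA mulrCA mulfV ?pnatr_eq0 // mulr1.
  rewrite scaler_nat mulr2n !scalerN scalerDr opprD; rewrite -!addrA; congr (_ + _); rewrite addrCA.
  by [].
by apply: CD; apply: CZ.
Qed.

Lemma Lsp_sum (R : realType) (n : nat) (C : set 'rV[R]_n) (hC : positive_cone C)
  (x : 'rV[R]_n) m (A : 'M[R]_(m, n)) (u : 'rV[R]_n) : C x ->
  (forall i, Lsp C x (row i A)) -> (u <= A)%MS -> Lsp C x u.
Proof.
move=> Cx hA /submxP [D ->]; rewrite mulmx_sum_row.
apply: (big_ind (Lsp C x)); first exact: Lsp0.
  by move=> a b; apply: LspD.
by move=> i _; apply: LspZ.
Qed.

Lemma Lsp_mono (R : realType) (n : nat) (C : set 'rV[R]_n) (hC : positive_cone C)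
  (x y v : 'rV[R]_n) (a : R) : 0 < a -> C (x - a *: y) -> Lsp C y v -> Lsp C x v.
Proof.
case: hC => [C0 [CD [CZ _]]] a0 Cxy [t [t0 [h1 h2]]].
exists (a * t); split; first by rewrite mulr_gt0.
split.
  have -> : x + (a * t) *: v = (x - a *: y) + a *: (y + t *: v).
    by rewrite scalerDr scalerA addrA subrK.
  by apply: CD => //; apply: CZ => //; rewrite ltW.
have -> : x - (a * t) *: v = (x - a *: y) + a *: (y - t *: v).
  by rewrite scalerBr scalerA addrA subrK.
by apply: CD => //; apply: CZ => //; rewrite ltW.
Qed.

Lemma Lsp_self (R : realType) (n : nat) (C : set 'rV[R]_n) (hC : positive_cone C)
  (x : 'rV[R]_n) : C x -> Lsp C x x.
Proof.
case: hC => [C0 [CD [CZ _]]] Cx; exists 2^-1; split; first by [].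
split; first by apply: CD => //; apply: CZ.
have -> : x - 2^-1 *: x = 2^-1 *: x.
  apply: (@scalerI _ _ 2); first by rewrite pnatr_eq0.
  rewrite scalerBr !scalerA mulfV ?pnatr_eq0 // scale1r scaler_nat mulr2n.
  by rewrite addrK.
by apply: CZ.
Qed.

Definition Bnd (R : realType) (n : nat) (C : set 'rV[R]_n) (x : 'rV[R]_n) (k : nat) :=
  forall m (A : 'M[R]_(m, n)), (forall i, Lsp C x (row i A)) -> (\rank A <= k)%N.

Lemma Bnd_strict (R : realType) (n : nat) (C : set 'rV[R]_n) (hC : positive_cone C)
  (x y w : 'rV[R]_n) (a : R) (k : nat) : C y -> 0 < a -> C (x - a *: y) ->
  Bnd C x k.+1 -> Lsp C x w -> ~ Lsp C y w -> Bnd C y k.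
Proof.
move=> Cy a0 Cxy hB Lw nLw m A hA.
have nwA : ~~ (w <= A)%MS by apply/negP => /(Lsp_sum hC Cy hA).
have hcol : forall i, Lsp C x (row i (col_mx A w)).
  move=> i; case: (splitP i) => j hij.
    have -> : i = lshift 1 j by apply: val_inj.
    by rewrite rowKu; apply: (Lsp_mono hC a0 Cxy).
  have -> : i = rshift m j by apply: val_inj.
  by rewrite rowKd; have -> : row j w = w by apply/rowP => l; rewrite mxE (ord1 j).
have := hB _ _ hcol.
rewrite -(addsmxE A w).
have : (A < A + w)%MS.
  rewrite ltmxE addsmxSl /=; apply/negP => h; apply/negP: nwA.
  by rewrite negbK; apply: submx_trans (addsmxSr A w) h.
rewrite ltmxErank => /andP [_ lt] le.
by rewrite -ltnS; apply: leq_trans lt le.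
Qed.

Lemma decomp (R : realType) (n : nat) (C : set 'rV[R]_n) (hC : positive_cone C)
  (P : 'M[R]_n) (hP : positive_map C P) (hQ : positive_map C (1%:M - P)) (k : nat) :
  forall x, C x -> Bnd C x k -> exists s : seq 'rV[R]_n,
    (forall e, e \in s -> C e /\ exists mu, e *m P = mu *: e) /\ x = \sum_(e <- s) e.
Proof.
have hC' := hC; case: hC' => [C0 [CD [CZ [Cpt [Ccl Cgen]]]]].
elim: k => [|k IH] x Cx hB.
  exists [::]; split => //; rewrite big_nil.
  have : (\rank x <= 0)%N.
    apply: hB => i; have -> : row i x = x by apply/rowP => l; rewrite mxE (ord1 i).
    exact: Lsp_self.
  by rewrite leqn0 mxrank_eq0 => /eqP.
have [->|x0] := eqVneq x 0.
  by exists [::]; split => //; rewrite big_nil.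
have CxP : C (x *m P) by apply: hP.
have CxQ : C (x - x *m P) by rewrite -[X in X - _]mulmx1 -mulmxBr; apply: hQ.
have [c1 [Cu1 max1]] : exists cm, C (x *m P - cm *: x) /\ forall c, C (x *m P - c *: x) -> c <= cm.
  by apply: (maxc hC Cx x0 (c0 := 0)); rewrite scale0r subr0.
have [c2 [Cu2 max2]] : exists cm, C (- (x *m P) - cm *: x) /\ forall c, C (- (x *m P) - c *: x) -> c <= cm.
  by apply: (maxc hC Cx x0 (c0 := -1)); rewrite scaleN1r opprK addrC.
set u1 := x *m P - c1 *: x in Cu1.
set u2 := - (x *m P) - c2 *: x in Cu2.
set d := - c2 - c1.
have hsum : u1 + u2 = d *: x.
  by apply/rowP => j; rewrite !mxE /d; ring.
have [dp|dn] := ltrP 0 d; last first.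
  have h0 : u1 + u2 = 0.
    apply: Cpt; first exact: CD.
    by rewrite hsum -scaleNr; apply: CZ => //; rewrite oppr_ge0.
  have u10 : u1 = 0.
    apply: Cpt => //; have -> : - u1 = u2 by apply/eqP; rewrite eq_sym -addr_eq0 addrC h0.
    exact: Cu2.
  exists [:: x]; split; last by rewrite big_seq1.
  move=> e; rewrite inE => /eqP ->; split => //; exists c1.
  by apply/eqP; rewrite -subr_eq0; apply/eqP.
set y1 := d^-1 *: u1; set y2 := d^-1 *: u2.
have Cy1 : C y1 by apply: CZ => //; rewrite invr_ge0 ltW.
have Cy2 : C y2 by apply: CZ => //; rewrite invr_ge0 ltW.
have hx : x = y1 + y2 by rewrite -scalerDr hsum scalerA mulVf ?gt_eqF // scale1r.
have e1 : x - 1 *: y1 = y2 by rewrite scale1r hx addrC addKr.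
have e2 : x - 1 *: y2 = y1 by rewrite scale1r hx addrK.
have Lx := Lsp_self hC Cx.
have nL1 : ~ Lsp C y1 x.
  case=> t [t0 [_ h]].
  have : C (x *m P - (c1 + d * t) *: x).
    have -> : x *m P - (c1 + d * t) *: x = d *: (y1 - t *: x).
      rewrite /y1 scalerBr scalerA mulfV ?gt_eqF // scale1r scalerA.
      by apply/rowP => j; rewrite !mxE /u1; ring.
    by apply: CZ => //; rewrite ltW.
  move/max1; rewrite gerDl; apply/negP; rewrite -ltNge; exact: mulr_gt0.
have nL2 : ~ Lsp C y2 x.
  case=> t [t0 [_ h]].
  have : C (- (x *m P) - (c2 + d * t) *: x).
    have -> : - (x *m P) - (c2 + d * t) *: x = d *: (y2 - t *: x).
      rewrite /y2 scalerBr scalerA mulfV ?gt_eqF // scale1r scalerA.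
      by apply/rowP => j; rewrite !mxE /u2; ring.
    by apply: CZ => //; rewrite ltW.
  move/max2; rewrite gerDl; apply/negP; rewrite -ltNge; exact: mulr_gt0.
have B1 : Bnd C y1 k by apply: (Bnd_strict hC Cy1 ltr01 _ hB Lx nL1); rewrite e1.
have B2 : Bnd C y2 k by apply: (Bnd_strict hC Cy2 ltr01 _ hB Lx nL2); rewrite e2.
rewrite hx; have [s1 [hs1 ->]] := IH _ Cy1 B1.
have [s2 [hs2 ->]] := IH _ Cy2 B2.
exists (s1 ++ s2); split; last by rewrite big_cat.
by move=> e; rewrite mem_cat => /orP [/hs1|/hs2].
Qed.

Lemma C_sum (R : realType) (n : nat) (C : set 'rV[R]_n) (hC : positive_cone C)
  (s : seq 'rV[R]_n) (p : pred 'rV[R]_n) :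
  (forall e, e \in s -> C e) -> C (\sum_(e <- s | p e) e).
Proof.
case: hC => [C0 [CD _]] hs; rewrite big_seq_cond.
apply: (big_ind C) => //; by move=> e /andP [/hs].
Qed.

Lemma decompC (R : realType) (n : nat) (C : set 'rV[R]_n) (hC : positive_cone C)
  (P : 'M[R]_n) (hP : positive_map C P) (hQ : positive_map C (1%:M - P)) x :
  C x -> exists s : seq 'rV[R]_n,
    (forall e, e \in s -> C e /\ exists mu, e *m P = mu *: e) /\ x = \sum_(e <- s) e.
Proof.
move=> Cx; apply: (decomp hC hP hQ (k := n)) => // m A _; exact: rank_leq_col.
Qed.

Lemma core (R : realType) (n : nat) (C : set 'rV[R]_n) (hC : positive_cone C)
  (hirr : irreducible_ordered C)
  (P : 'M[R]_n) (hP : positive_map C P) (hQ : positive_map C (1%:M - P))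
  (e0 : 'rV[R]_n) : C e0 -> e0 != 0 -> exists l : R, P = l%:M.
Proof.
have hC' := hC; case: hC' => [C0 [CD [CZ [Cpt [Ccl Cgen]]]]].
move=> Ce0 e00.
have [s0 [hs0 he0]] := decompC hC hP hQ Ce0.
have [e1 [Ce1 [l hl] e10]] : exists e1, [/\ C e1, exists l, e1 *m P = l *: e1 & e1 != 0].
  apply/not_existsP => hno; move/eqP: e00; apply.
  rewrite he0 big_seq big1 // => e es; have [Ce [mu hmu]] := hs0 e es.
  have [//|ne] := eqVneq e 0; exfalso; apply: (hno e); split => //; by exists mu.
exists l.
set T := P - l%:M.
have eT (e : 'rV[R]_n) : e *m T = e *m P - l *: e by rewrite mulmxBr mul_mx_scalar.
have [/eqP|T0] := eqVneq T 0; first by rewrite subr_eq0 => /eqP.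
exfalso; apply: hirr; exists (kermx T), T.
have eig_sub (e : 'rV[R]_n) : (exists mu, e *m P = mu *: e) ->
    (e *m T == 0) = false -> (e <= T)%MS.
  move=> [mu hmu] /negbT neT.
  have hml : mu - l != 0.
    apply: contraNneq neT => h; rewrite eT hmu; apply/eqP.
    by move/eqP: h; rewrite subr_eq0 => /eqP ->; rewrite subrr.
  have -> : e = (mu - l)^-1 *: (e *m T).
    by rewrite eT hmu -scalerBl scalerA mulVf // scale1r.
  by apply: scalemx_sub; apply: submxMl.
have Csub x : C x -> (x <= kermx T + T)%MS.
  move=> Cx; have [s [hs ->]] := decompC hC hP hQ Cx.
  rewrite big_seq; apply: summx_sub => e es; have [Ce he] := hs e es.
  case hT: (e *m T == 0).
    by apply: submx_trans (addsmxSl _ _); rewrite sub_kermx hT.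
  by apply: submx_trans (addsmxSr _ _); apply: eig_sub.
have full : (kermx T + T == 1%:M)%MS.
  apply/andP; split; first exact: submx1.
  apply/row_subP => i; have [x [y [Cx [Cy ->]]]] := Cgen (row i 1%:M).
  apply: addmx_sub; first exact: Csub.
  by rewrite -scaleN1r; apply: scalemx_sub; apply: Csub.
split.
- apply: contraNneq e10 => h.
  have : (e1 <= kermx T)%MS by rewrite sub_kermx eT hl subrr.
  by rewrite h submx0.
- exact: T0.
- apply/andP; split; last exact: sub0mx.
  rewrite submx0 -mxrank_eq0.
  have := mxrank_sum_cap (kermx T) T.
  rewrite (eqmx_rank full) mxrank1 mxrank_ker.
  have := rank_leq_row T => hle.
  move=> h; apply/eqP; move: h hle; lia.
- exact: full.
move=> x; split; last first.
  by case=> y [z [_ Cy _ Cz ->]]; apply: CD.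
move=> Cx; have [s [hs ->]] := decompC hC hP hQ Cx.
exists (\sum_(e <- s | e *m T == 0) e), (\sum_(e <- s | ~~ (e *m T == 0)) e).
split.
- rewrite big_seq_cond; apply: summx_sub => e /andP [_ h]; by rewrite sub_kermx.
- by apply: C_sum => // e /hs [].
- rewrite big_seq_cond; apply: summx_sub => e /andP [es h].
  by apply: eig_sub; [case: (hs e es) | apply/negbTE].
- by apply: C_sum => // e /hs [].
- exact: bigID.
Qed.

Lemma scale_nonneg (R : realType) (n : nat) (C : set 'rV[R]_n) (hC : positive_cone C)
  (e : 'rV[R]_n) (a : R) : C e -> e != 0 -> C (a *: e) -> 0 <= a.
Proof.
case: hC => [C0 [CD [CZ [Cpt _]]]] Ce e0 Cae; rewrite leNgt; apply/negP => an.
move/eqP: e0; apply; apply: Cpt => //.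
have -> : - e = (- a^-1) *: (a *: e).
  by rewrite scalerA mulNr mulVf ?lt_eqF // scaleN1r.
by apply: CZ => //; rewrite oppr_ge0 invr_le0 ltW.
Qed.

Unset Implicit Arguments.
Theorem theorem3p3 (R : realType) (n : nat) (C : set 'M[R]_(1, n))
  (hC : positive_cone C) (hirr : irreducible_ordered C)
  (chi psi mu : 'M[R]_n) (hchi : order_automorphism C chi)
  (hpsi : positive_map C psi) (hmu : positive_map C mu)
  (hsum : chi = psi + mu) :
  exists a b : R, [/\ 0 <= a, 0 <= b, psi = a *: chi & mu = b *: chi].
Proof.
have hC' := hC; case: hC' => [C0 [CD [CZ [Cpt [Ccl Cgen]]]]].
case: hchi => chiU hchiC.
case: (pselect (exists e0, C e0 /\ e0 != 0)) => [[e0 [Ce0 e00]]|hno]; last first.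
  have z0 (u : 'rV[R]_n) : u = 0.
    have [x [y [Cx [Cy ->]]]] := Cgen u.
    have zz v : C v -> v = 0.
      move=> Cv; have [//|ne] := eqVneq v 0; exfalso; apply: hno; by exists v.
    by rewrite (zz x Cx) (zz y Cy) subr0.
  exists 0, 0; split => //; apply/eqP/mulmxP => u; by rewrite (z0 u) !mul0mx.
set P := psi *m invmx chi.
have hPchi : P *m chi = psi by rewrite /P mulmxKV.
have hQ1 : 1%:M - P = mu *m invmx chi.
  apply/eqP; rewrite subr_eq /P -mulmxDl addrC -hsum mulmxV //.
have posP : positive_map C P.
  move=> x Cx; apply/hchiC; rewrite -mulmxA hPchi; exact: hpsi.
have posQ : positive_map C (1%:M - P).
  move=> x Cx; apply/hchiC; rewrite hQ1 -mulmxA mulmxKV //; exact: hmu.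
have [l hl] := core hC hirr posP posQ Ce0 e00.
exists l, (1 - l); split.
- apply: (scale_nonneg hC Ce0 e00); rewrite -mul_mx_scalar -hl; exact: posP.
- apply: (scale_nonneg hC Ce0 e00).
  have -> : (1 - l) *: e0 = e0 *m (1%:M - P) by rewrite hl mulmxBr mulmx1 mul_mx_scalar scalerBl scale1r.
  exact: posQ.
- by rewrite -hPchi hl mul_scalar_mx.
- have -> : mu = chi - psi by rewrite hsum addrC addKr.
  by rewrite -hPchi hl mul_scalar_mx scalerBl scale1r.
Qed.
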